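(* Consider a matched pair study and assume Fisher's null $H_0$ holds. Let $\alpha\in(0,1)$ and, for $\Gamma_0\in[1,\infty]$ and $1\le k\le I$, let $\mathcal S_{\Gamma_0;k}=\{\Gamma\in[1,\infty]^I:\Gamma_{(k)}\le\Gamma_0\}$, where $\Gamma_{(k)}$ is the $k$th smallest coordinate of $\Gamma$. Then $$\bigcap_{k=1}^I\ \bigcap_{\Gamma_0:\overline p_{\Gamma_0;k}\le\alpha}\mathcal S_{\Gamma_0;k}^c=\bigcap_{\Gamma_0\ge1}\ \bigcap_{k:\overline p_{\Gamma_0;k}\le\alpha}\mathcal S_{\Gamma_0;k}^c=\bigcap_{(\Gamma_0,k):\overline p_{\Gamma_0;k}\le\alpha}\mathcal S_{\Gamma_0;k}^c,$$ where the first expression is the intersection over $k$ of the confidence sets $\{\Gamma^\star_{(k)}\in\{\Gamma_0:\overline p_{\Gamma_0;k}>\alpha\}\}$ rewritten as sets of $\Gamma^\star$ and the second is the intersection over $\Gamma_0$ of the confidence sets $\{I^\star(\Gamma_0)\in\{I-k:\overline p_{\Gamma_0;k}>\alpha\}\}$ rewritten as sets of $\Gamma^\star$. Moreover, $\mathbb P\big(\Gamma^\star\in\bigcap_{(\Gamma_0,k):\overline p_{\Gamma_0;k}\le\alpha}\mathcal S_{\Gamma_0;k}^c\big)\ge1-\alpha$; equivalently, with probability at least $1-\alpha$, $\overline p_{\Gamma^\star_{(k)};k}>\alpha$ simultaneously for all $1\le k\le I$.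
   Context: Setting: $I$ matched pairs, potential outcomes fixed, $Z$ (one treated unit per pair) is the only randomness with true mechanism $\mathbb P(Z=z)=\prod_i\prod_j(p^\star_{ij})^{z_{ij}}$, $p^\star_{i1}+p^\star_{i2}=1$; true hidden bias $\Gamma^\star_i=\max_jp^\star_{ij}/\min_kp^\star_{ik}\in[1,\infty]$, $\Gamma^\star=(\Gamma^\star_1,\dots,\Gamma^\star_I)$, $\Gamma^\star_{(k)}$ its $k$th smallest value, $I^\star(\Gamma_0)=\#\{i:\Gamma^\star_i>\Gamma_0\}$. Fisher's null $H_0$: $Y_{ij}(1)=Y_{ij}(0)$ for all $i,j$. $T=\sum_i\sum_jZ_{ij}q_{ij}$ with $q_{ij}$ fixed functions of $Y(0)$. Fix an ordering of pairs by nondecreasing $|q_{i1}-q_{i2}|$; $\mathcal I_k$ is the first $k$ pairs. $\overline T(\Gamma_0;k)$ is a sum of independent variables: for $i\in\mathcal I_k$ it equals $\max\{q_{i1},q_{i2}\}$ with probability $\Gamma_0/(1+\Gamma_0)$ (probability 1 if $\Gamma_0=\infty$) and $\min\{q_{i1},q_{i2}\}$ otherwise; for $i\notin\mathcal I_k$ it equals $\max\{q_{i1},q_{i2}\}$ with probability 1. $\overline p_{\Gamma_0;k}=\mathbb P(\overline T(\Gamma_0;k)\ge c)|_{c=T}$; $\mathcal S^c$ denotes the complement in $[1,\infty]^I$. *)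

(* Defs.v *)
From HB Require Import structures.
From mathcomp Require Import all_boot all_order all_algebra fingroup perm.
From mathcomp Require Import boolp classical_sets constructive_ereal reals.
Set Implicit Arguments. Unset Strict Implicit. Unset Printing Implicit Defensive.
Import Order.TTheory GRing.Theory Num.Theory.
Local Open Scope ring_scope.
Local Open Scope classical_set_scope.

Section MatchedPairs.
Variables (R : realType) (n : nat).

(* A treatment assignment: z i is the index (0 or 1, i.e. unit j=1 or j=2)
   of the treated unit in pair i.  (Z_{ij} = 1 iff z i = j.) *)
Definition assignment := {ffun 'I_n -> 'I_2}.

Definition is_mechanism (p : 'I_n -> 'I_2 -> R) : Prop :=
  (forall i j, 0 <= p i j) /\ (forall i, \sum_(j < 2) p i j = 1).

(* P(E) under P(Z = z) = prod_i prod_j (p_ij)^{z_ij} = prod_i p i (z i). *)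
Definition prob (p : 'I_n -> 'I_2 -> R) (E : assignment -> Prop) : R :=
  \sum_(z : assignment | `[< E z >]) \prod_(i < n) p i (z i).

Definition gamma_star (p : 'I_n -> 'I_2 -> R) (i : 'I_n) : \bar R :=
  let mx := Num.max (p i ord0) (p i ord_max) in
  let mn := Num.min (p i ord0) (p i ord_max) in
  if mn == 0 then +oo%E else (mx / mn)%:E.

Definition T (q : 'I_n -> 'I_2 -> R) (z : assignment) : R :=
  \sum_(i < n) q i (z i).

Definition qmax (q : 'I_n -> 'I_2 -> R) i := Num.max (q i ord0) (q i ord_max).
Definition qmin (q : 'I_n -> 'I_2 -> R) i := Num.min (q i ord0) (q i ord_max).

(* rk is an ordering of the pairs (rk i = position of pair i, 0-based) by
   nondecreasing |q_i1 - q_i2|; I_k = {i | rk i < k} = first k pairs. *)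
Definition ordered_by_absdiff (q : 'I_n -> 'I_2 -> R) (rk : {perm 'I_n}) : Prop :=
  forall i j : 'I_n, (rk i < rk j)%N ->
    `|q i ord0 - q i ord_max| <= `|q j ord0 - q j ord_max|.

Definition theta (G0 : \bar R) : R :=
  match G0 with
  | (g%:E)%E => g / (1 + g)
  | (+oo)%E => 1
  | (-oo)%E => 0
  end.

(* Law of the independent components of Tbar(Gamma0;k): b i = true means the
   component equals max{q_i1,q_i2}, false means min{q_i1,q_i2}. *)
Definition wbar (rk : {perm 'I_n}) (G0 : \bar R) (k : nat) (i : 'I_n) (b : bool) : R :=
  if (rk i < k)%N then (if b then theta G0 else 1 - theta G0)
  else (if b then 1 else 0).

Definition Tbar_tail (q : 'I_n -> 'I_2 -> R) (rk : {perm 'I_n}) (G0 : \bar R) (k : nat)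
  (c : R) : R :=
  \sum_(b : {ffun 'I_n -> bool} |
          c <= \sum_(i < n) (if b i then qmax q i else qmin q i))
     \prod_(i < n) wbar rk G0 k i (b i).

Definition pbar (q : 'I_n -> 'I_2 -> R) (rk : {perm 'I_n}) (z : assignment)
  (G0 : \bar R) (k : nat) : R :=
  Tbar_tail q rk G0 k (T q z).

Definition Gspace : set ('I_n -> \bar R) := [set G | forall i, (1 <= G i)%E].

Definition kth (G : 'I_n -> \bar R) (k : nat) : \bar R :=
  nth (+oo)%E (sort (fun x y : \bar R => (x <= y)%E) [seq G i | i <- enum 'I_n]) k.-1.

Definition Icount (G : 'I_n -> \bar R) (G0 : \bar R) : nat :=
  #|[set i | (G0 < G i)%E]|.

Definition S (G0 : \bar R) (k : nat) : set ('I_n -> \bar R) :=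
  [set G | Gspace G /\ (kth G k <= G0)%E].
Definition Sc (G0 : \bar R) (k : nat) : set ('I_n -> \bar R) := Gspace `\` S G0 k.

Definition interA (pv : \bar R -> nat -> R) (alpha : R) : set ('I_n -> \bar R) :=
  Gspace `&`
  \bigcap_(k in [set k : nat | (1 <= k <= n)%N])
    \bigcap_(G0 in [set G0 : \bar R | (1 <= G0)%E /\ pv G0 k <= alpha]) Sc G0 k.

Definition interB (pv : \bar R -> nat -> R) (alpha : R) : set ('I_n -> \bar R) :=
  Gspace `&`
  \bigcap_(G0 in [set G0 : \bar R | (1 <= G0)%E])
    \bigcap_(k in [set k : nat | (1 <= k <= n)%N /\ pv G0 k <= alpha]) Sc G0 k.

Definition interC (pv : \bar R -> nat -> R) (alpha : R) : set ('I_n -> \bar R) :=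
  Gspace `&`
  \bigcap_(x in [set x : \bar R * nat |
                  [/\ (1 <= x.1)%E, (1 <= x.2 <= n)%N & pv x.1 x.2 <= alpha]])
    Sc x.1 x.2.

End MatchedPairs.
Arguments interA {R} n pv alpha.
Arguments interB {R} n pv alpha.
Arguments interC {R} n pv alpha.

(* Main.v *)
Require Import Defs.
From HB Require Import structures.
From mathcomp Require Import all_boot all_order all_algebra fingroup perm.
From mathcomp Require Import boolp classical_sets constructive_ereal reals.
From mathcomp Require Import ring lra zify.
Import Order.TTheory GRing.Theory Num.Theory.
Local Open Scope ring_scope.
Local Open Scope classical_set_scope.
Set Implicit Arguments. Unset Strict Implicit. Unset Printing Implicit Defensive.


Definition mu (R : realType) (n : nat) (w : 'I_n -> bool -> R)
  (A : pred {ffun 'I_n -> bool}) : R :=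
  \sum_(b | A b) \prod_(i < n) w i (b i).

Definition upward (n : nat) (A : pred {ffun 'I_n -> bool}) : Prop :=
  forall b b' : {ffun 'I_n -> bool}, (forall i, b i -> b' i) -> A b -> A b'.

Lemma mu_ext (R : realType) (n : nat) (w w' : 'I_n -> bool -> R) A :
  (forall i b, w i b = w' i b) -> mu w A = mu w' A.
Proof. by move=> H; apply: eq_bigr => b _; apply: eq_bigr => i _; rewrite H. Qed.

Definition flipf (n : nat) (i0 : 'I_n) (b : {ffun 'I_n -> bool}) : {ffun 'I_n -> bool} :=
  [ffun i => if i == i0 then ~~ b i else b i].

Lemma flipfK (n : nat) (i0 : 'I_n) : involutive (flipf i0).
Proof.
move=> b; apply/ffunP => i; rewrite !ffunE; case: (i == i0) => //; exact: negbK.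
Qed.

Lemma sum_flip (R : realType) (n : nat) (i0 : 'I_n) (F : {ffun 'I_n -> bool} -> R) :
  \sum_(b : {ffun 'I_n -> bool}) F b = \sum_(b : {ffun 'I_n -> bool} | b i0) (F b + F (flipf i0 b)).
Proof.
rewrite (bigID (fun b : {ffun 'I_n -> bool} => b i0) predT) /= big_split /=; congr (_ + _).
rewrite (reindex_inj (inv_inj (flipfK i0))) /=.
by apply: eq_bigl => b; rewrite ffunE eqxx negbK.
Qed.

Lemma mu_one_coord (R : realType) (n : nat) (w w' : 'I_n -> bool -> R)
  (A : pred {ffun 'I_n -> bool}) (i0 : 'I_n) :
  (forall i b, 0 <= w i b) ->
  w i0 true + w i0 false = 1 -> w' i0 true + w' i0 false = 1 ->
  (forall i b, i != i0 -> w' i b = w i b) ->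
  w i0 true <= w' i0 true -> upward A -> mu w A <= mu w' A.
Proof.
move=> w0 nw nw' weq wle Aup.
rewrite /mu big_mkcond [X in _ <= X]big_mkcond /=.
rewrite (sum_flip i0) [X in _ <= X](sum_flip i0).
apply: ler_sum => b bi0.
set P := \prod_(i < n | i != i0) w i (b i).
have P0 : 0 <= P by apply: prodr_ge0 => i _.
have Hb : forall v : 'I_n -> bool -> R, (forall i b, i != i0 -> v i b = w i b) ->
   \prod_(i < n) v i (b i) = v i0 true * P.
  move=> v hv; rewrite (bigD1 i0) //= bi0; congr (_ * _).
  by apply: eq_bigr => i hi; rewrite hv.
have Hfb : forall v : 'I_n -> bool -> R, (forall i b, i != i0 -> v i b = w i b) ->
   \prod_(i < n) v i (flipf i0 b i) = v i0 false * P.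
  move=> v hv; rewrite (bigD1 i0) //= ffunE eqxx bi0 /=; congr (_ * _).
  by apply: eq_bigr => i hi; rewrite ffunE (negbTE hi) hv.
rewrite (Hb w) // (Hfb w) // (Hb w') // (Hfb w') //.
have e1 : w i0 false = 1 - w i0 true by rewrite -nw addrC addKr.
have e2 : w' i0 false = 1 - w' i0 true by rewrite -nw' addrC addKr.
rewrite e1 e2.
case Afb: (A (flipf i0 b)).
  have -> : A b.
    apply: (Aup (flipf i0 b)) => // i; rewrite ffunE; case: eqP => [->|//].
    by rewrite bi0.
  by rewrite -!mulrDl !subrKC.
case: (A b); last by rewrite !addr0.
by rewrite !addr0; apply: ler_wpM2r.
Qed.

Lemma mu_dom (R : realType) (n : nat) (w w' : 'I_n -> bool -> R)
  (A : pred {ffun 'I_n -> bool}) :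
  (forall i b, 0 <= w i b) -> (forall i b, 0 <= w' i b) ->
  (forall i, w i true + w i false = 1) -> (forall i, w' i true + w' i false = 1) ->
  (forall i, w i true <= w' i true) -> upward A -> mu w A <= mu w' A.
Proof.
move=> w0 w'0 nw nw' wle Aup.
pose hyb (m : nat) (i : 'I_n) (b : bool) := if (i < m)%N then w' i b else w i b.
suff H : forall m, mu w A <= mu (hyb m) A.
  apply: (le_trans (H n)); rewrite (@mu_ext _ _ _ w' A) // => i b.
  by rewrite /hyb ltn_ord.
elim=> [|m IH].
  by rewrite (@mu_ext _ _ _ w A) // => i b; rewrite /hyb ltn0.
apply: (le_trans IH).
case: (ltnP m n) => hm.
  apply: (@mu_one_coord _ _ _ _ A (Ordinal hm)) => //.
  - by move=> i b; rewrite /hyb; case: ifP.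
  - by rewrite /hyb /= ltnn.
  - by rewrite /hyb /= ltnSn.
  - move=> i b hi; rewrite /hyb ltnS leq_eqVlt.
    have -> : (nat_of_ord i == m) = false.
      by apply/negbTE; apply: contra hi => /eqP hh; apply/eqP/val_inj.
    by [].
  - by rewrite /hyb /= ltnn ltnSn.
rewrite (@mu_ext _ _ _ (hyb m) A) // => i b.
rewrite /hyb ltnS (leq_trans (ltnW (ltn_ord i)) hm).
by rewrite (leq_trans (ltn_ord i) hm).
Qed.


Definition sv (R : realType) (n : nat) (q : 'I_n -> 'I_2 -> R) (b : {ffun 'I_n -> bool}) : R :=
  \sum_(i < n) (if b i then qmax q i else qmin q i).

Definition Ac (R : realType) (n : nat) (q : 'I_n -> 'I_2 -> R) (c : R) : pred {ffun 'I_n -> bool} :=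
  fun b => c <= sv q b.

Definition wS (R : realType) (n : nat) (th : R) (S : {set 'I_n}) (i : 'I_n) (b : bool) : R :=
  if i \in S then (if b then th else 1 - th) else (if b then 1 else 0).

Lemma qmin_le_qmax (R : realType) (n : nat) (q : 'I_n -> 'I_2 -> R) i : qmin q i <= qmax q i.
Proof. by rewrite /qmin /qmax; case: (leP (q i ord0) (q i ord_max)) => // /ltW. Qed.

Lemma upward_Ac (R : realType) (n : nat) (q : 'I_n -> 'I_2 -> R) c : upward (Ac q c).
Proof.
move=> b b' H; rewrite /Ac /sv => /le_trans; apply; apply: ler_sum => i _.
case bi: (b i); first by rewrite (H i bi).
by case: (b' i) => //; exact: qmin_le_qmax.
Qed.

Lemma wS_ge0 (R : realType) (n : nat) (th : R) (S : {set 'I_n}) i b : 0 <= th <= 1 -> 0 <= wS th S i b.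
Proof. by case/andP=> h0 h1; rewrite /wS; case: (i \in S); case: b; rewrite ?subr_ge0. Qed.

Lemma wS_norm (R : realType) (n : nat) (th : R) (S : {set 'I_n}) i : wS th S i true + wS th S i false = 1.
Proof. by rewrite /wS; case: (i \in S); rewrite ?addr0 // addrC subrK. Qed.

Lemma swap_le (R : realType) (n : nat) (q : 'I_n -> 'I_2 -> R) (th : R) (S : {set 'I_n})
  (i j : 'I_n) c :
  0 <= th <= 1 -> i \in S -> j \notin S ->
  qmax q j - qmin q j <= qmax q i - qmin q i ->
  mu (wS th S) (Ac q c) <= mu (wS th (j |: (S :\ i))) (Ac q c).
Proof.
move=> th01 iS jS dji.
have ij : i != j by apply: contraNneq jS => <-.
pose s := tperm i j.
pose h (b : {ffun 'I_n -> bool}) : {ffun 'I_n -> bool} := [ffun x => b (s x)].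
have hK : involutive h by move=> b; apply/ffunP => x; rewrite !ffunE tpermK.
rewrite /mu (reindex_inj (inv_inj hK)) /=.
have memS : forall y, (s y \in S) = (y \in j |: (S :\ i)).
  move=> y; rewrite !inE; case: tpermP => [->|->|/eqP yi /eqP yj].
  - by rewrite (negbTE jS) (negbTE ij) eqxx.
  - by rewrite iS eqxx.
  - by rewrite (negbTE yj) yi.
have prodE : forall b, \prod_(x < n) wS th S x (h b x) =
                       \prod_(x < n) wS th (j |: (S :\ i)) x (b x).
  move=> b; rewrite (reindex_inj (@perm_inj _ s)) /=.
  by apply: eq_bigr => x _; rewrite ffunE tpermK /wS memS.
rewrite big_mkcond [X in _ <= X]big_mkcond /=; apply: ler_sum => b _.
rewrite prodE.
have P0 : 0 <= \prod_(x < n) wS th (j |: (S :\ i)) x (b x).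
  by apply: prodr_ge0 => x _; exact: wS_ge0.
case Ah: (Ac q c (h b)); last by case: (Ac q c b).
case Ab: (Ac q c b) => //.
case bi: (b i).
  move: Ah Ab; rewrite /Ac => Ah; rewrite (le_trans Ah) //.
  rewrite -subr_le0 /sv -sumrB (bigD1 i) //= (bigD1 j) /=; last by rewrite eq_sym.
  rewrite big1; last first.
    move=> x /andP[xi xj]; rewrite ffunE tpermD 1?eq_sym // subrr //.
  rewrite !ffunE tpermL tpermR bi addr0.
  case: (b j); first by rewrite !subrr addr0.
  by move: dji; lra.
rewrite (bigD1 i) //= bi /wS !inE eqxx andFb (negbTE ij) /= mul0r.
by [].
Qed.

Lemma swap_to (R : realType) (n : nat) (q : 'I_n -> 'I_2 -> R) (th : R) (Rs : {set 'I_n}) c :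
  0 <= th <= 1 ->
  (forall i j, i \notin Rs -> j \in Rs -> qmax q j - qmin q j <= qmax q i - qmin q i) ->
  forall K : {set 'I_n}, #|K| = #|Rs| -> mu (wS th K) (Ac q c) <= mu (wS th Rs) (Ac q c).
Proof.
move=> th01 hd.
suff H : forall m (K : {set 'I_n}), #|K :\: Rs| = m -> #|K| = #|Rs| ->
    mu (wS th K) (Ac q c) <= mu (wS th Rs) (Ac q c) by move=> K; apply: H.
elim=> [|m IH] K hm hK.
  have KR : K \subset Rs by rewrite -finset.setD_eq0 -cards_eq0 hm.
  have -> : K = Rs by apply/eqP; rewrite eqEcard KR hK leqnn.
  by [].
have : (0 < #|K :\: Rs|)%N by rewrite hm.
case/card_gt0P => i; rewrite inE => /andP[iR iK].
have : (0 < #|Rs :\: K|)%N.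
  by rewrite cardsD finset.setIC -hK -cardsD hm.
case/card_gt0P => j; rewrite inE => /andP[jK jR].
apply: le_trans (swap_le c th01 iK jK (hd i j iR jR)) _.
apply: IH.
  have -> : (j |: (K :\ i)) :\: Rs = (K :\: Rs) :\ i.
    apply/setP => x; rewrite !inE; case: (eqVneq x j) => [->|xj] /=.
      by rewrite jR /= andbF.
    by rewrite andbCA.
  have := cardsD1 i (K :\: Rs); rewrite hm !inE iR iK /= add1n => -[] //.
rewrite cardsU1 !inE (negbTE jK) andbF /= add1n -hK.
by rewrite (cardsD1 i K) iK.
Qed.


Lemma theta01 (R : realType) (G : \bar R) : (1 <= G)%E -> 0 <= theta G <= 1.
Proof.
case: G => [g| |] //=; last by rewrite lexx ler01.
rewrite lee_fin => g1.
have h : 0 < 1 + g by lra.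
rewrite divr_ge0 ?ler_pdivrMr //=; lra.
Qed.

Lemma theta_mono (R : realType) (G G' : \bar R) :
  (1 <= G)%E -> (G <= G')%E -> theta G <= theta G'.
Proof.
move=> G1 GG'; have := theta01 G1; case/andP=> _ t1.
case: G' GG' => [g'| |] //=; last first.
  by move=> /(le_trans G1).
case: G G1 t1 => [g| |] //=; rewrite !lee_fin => g1 _ gg'.
have h : 0 < 1 + g by lra.
have h' : 0 < 1 + g' by lra.
rewrite ler_pdivrMr // mulrAC ler_pdivlMr //; nra.
Qed.

Lemma I2_cases (x : 'I_2) : x = ord0 \/ x = ord_max.
Proof. case: x => [[|[|m]] hm]; [left|right|by []]; exact: val_inj. Qed.

Lemma sum_I2 (R : realType) (f : 'I_2 -> R) : \sum_(j < 2) f j = f ord0 + f ord_max.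
Proof.
rewrite big_ord_recl big_ord1; congr (_ + f _); exact: val_inj.
Qed.

Lemma gs_ge1 (R : realType) (n : nat) (p : 'I_n -> 'I_2 -> R) i :
  is_mechanism p -> (1 <= gamma_star p i)%E.
Proof.
case=> p0 _; rewrite /gamma_star.
set a := p i ord0; set b := p i ord_max.
case: eqP => [_|mn0]; first exact: leey.
have mnge : 0 <= Num.min a b by rewrite le_min p0 p0.
have mnpos : 0 < Num.min a b by rewrite lt_neqAle eq_sym mnge andbT; apply/eqP.
rewrite lee_fin ler_pdivlMr // mul1r.
by case: (leP a b) => // /ltW.
Qed.

Lemma p_le_theta (R : realType) (n : nat) (p : 'I_n -> 'I_2 -> R) i j :
  is_mechanism p -> p i j <= theta (gamma_star p i).
Proof.
case=> p0 p1; have := p1 i; rewrite sum_I2 => ab.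
rewrite /gamma_star.
have pjle : p i j <= Num.max (p i ord0) (p i ord_max).
  by rewrite le_max; case: (I2_cases j) => ->; rewrite lexx ?orbT.
case: eqP => [_|mn0] /=.
  apply: (le_trans pjle); rewrite -ab.
  by have := p0 i ord0; have := p0 i ord_max; case: (leP (p i ord0) (p i ord_max)) => _; lra.
have e := addr_min_max (p i ord0) (p i ord_max); rewrite ab in e.
set mn := Num.min _ _ in e mn0 *; set mx := Num.max _ _ in e pjle *.
have -> : mx / mn / (1 + mx / mn) = mx.
  have -> : mx = 1 - mn by rewrite -e addrC addKr.
  have mn0' : mn != 0 by apply/eqP.
  field; rewrite ?mn0' //.
  by rewrite addrC subrK oner_neq0.
exact: pjle.
Qed.


Lemma sorted_nth_le (R : realType) (s : seq (\bar R)) (a : \bar R) j :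
  sorted (fun x y : \bar R => (x <= y)%E) s -> (j < size s)%N ->
  ((nth +oo%E s j <= a)%E = (j < count (fun x => (x <= a)%E) s))%N.
Proof.
elim: s j => [//|x s IH] j /= ps.
have allx : all (fun y => (x <= y)%E) s.
  by apply: (order_path_min _ ps) => u v w; exact: le_trans.
have ss := path_sorted ps.
have cnt0 : ~~ (x <= a)%E -> count (fun x0 => (x0 <= a)%E) s = 0%N.
  move=> xa; apply/eqP; rewrite -leqn0 leqNgt -has_count; apply/hasPn => y ys.
  by apply: (contraNN _ xa) => ya; apply: (le_trans _ ya); exact: (allP allx).
case: j => [|j] /=.
  case xa: (x <= a)%E => //=.
  by rewrite add0n cnt0 ?xa.
rewrite ltnS => js.
case xa: (x <= a)%E => /=.
  by rewrite add1n ltnS IH.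
rewrite add0n cnt0 ?xa // ltn0.
apply/negbTE; apply: contraFN xa => h; apply: le_trans h.
by apply: (allP allx); exact: mem_nth.
Qed.

Lemma kth_size (R : realType) (n : nat) (G : 'I_n -> \bar R) :
  size (sort (fun x y : \bar R => (x <= y)%E) [seq G i | i <- enum 'I_n]) = n.
Proof. by rewrite size_sort size_map size_enum_ord. Qed.

Lemma kth_mem (R : realType) (n : nat) (G : 'I_n -> \bar R) k :
  (1 <= k <= n)%N -> exists i, kth G k = G i.
Proof.
case/andP=> k1 kn.
have : kth G k \in sort (fun x y : \bar R => (x <= y)%E) [seq G i | i <- enum 'I_n].
  by apply: mem_nth; rewrite kth_size; case: k k1 kn => //.
rewrite mem_sort => /mapP[i _ ->]; by exists i.
Qed.

Lemma kth_ge1 (R : realType) (n : nat) (G : 'I_n -> \bar R) k :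
  Gspace G -> (1 <= k <= n)%N -> (1 <= kth G k)%E.
Proof. by move=> GS /(kth_mem G) [i ->]; exact: GS. Qed.

Lemma card_le (R : realType) (n : nat) (G : 'I_n -> \bar R) (G0 : \bar R) :
  #|[pred i | (G i <= G0)%E]| = count (fun x => (x <= G0)%E) [seq G i | i <- enum 'I_n].
Proof. by rewrite count_map enumT cardE /enum_mem size_filter. Qed.

Lemma kth_count (R : realType) (n : nat) (G : 'I_n -> \bar R) (G0 : \bar R) k :
  (1 <= k <= n)%N -> (kth G k <= G0)%E = (k <= #|[pred i | (G i <= G0)%E]|)%N.
Proof.
case/andP=> k1 kn.
rewrite /kth sorted_nth_le ?kth_size; last 2 first.
- by apply: sort_sorted => x y; exact: le_total.
- by case: k k1 kn.
by rewrite count_sort card_le; case: k k1 kn.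
Qed.

Lemma Icount_pred (R : realType) (n : nat) (G : 'I_n -> \bar R) (G0 : \bar R) :
  Icount G G0 = #|[pred i | (G0 < G i)%E]|.
Proof.
rewrite /Icount; apply: eq_card => i.
by rewrite !inE; apply/idP/idP => [/asboolP|h]; [|apply/asboolP].
Qed.

Lemma Icount_le (R : realType) (n : nat) (G : 'I_n -> \bar R) (G0 : \bar R) :
  (#|[pred i | (G i <= G0)%E]| + Icount G G0 = n)%N.
Proof.
rewrite Icount_pred -[in RHS](card_ord n) -(cardC [pred i | (G i <= G0)%E]).
congr (_ + _)%N; apply: eq_card => i; rewrite !inE /= ltNge.
by [].
Qed.


Lemma pbar_mu (R : realType) (n : nat) (q : 'I_n -> 'I_2 -> R) (rk : {perm 'I_n}) z G0 k :
  pbar q rk z G0 k = mu (wS (theta G0) [set i | (rk i < k)%N]%SET) (Ac q (T q z)).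
Proof.
transitivity (mu (wbar rk G0 k) (Ac q (T q z))); first by [].
by apply: mu_ext => i b; rewrite /wbar /wS inE.
Qed.

Lemma pbar_monoG (R : realType) (n : nat) (q : 'I_n -> 'I_2 -> R) (rk : {perm 'I_n}) z
  (G0 G1 : \bar R) k :
  (1 <= G0)%E -> (G0 <= G1)%E -> pbar q rk z G0 k <= pbar q rk z G1 k.
Proof.
move=> g1 g01; have t0 := theta01 g1; have t1 := theta01 (le_trans g1 g01).
rewrite !pbar_mu; apply: mu_dom.
- by move=> i b; exact: wS_ge0.
- by move=> i b; exact: wS_ge0.
- by move=> i; exact: wS_norm.
- by move=> i; exact: wS_norm.
- move=> i; rewrite /wS; case: (_ \in _) => //; exact: theta_mono.
- exact: upward_Ac.
Qed.

Lemma pbar_monok (R : realType) (n : nat) (q : 'I_n -> 'I_2 -> R) (rk : {perm 'I_n}) z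
  (G0 : \bar R) k k' :
  (1 <= G0)%E -> (k <= k')%N -> pbar q rk z G0 k' <= pbar q rk z G0 k.
Proof.
move=> g1 kk'; have t0 := theta01 g1.
rewrite !pbar_mu; apply: mu_dom.
- by move=> i b; exact: wS_ge0.
- by move=> i b; exact: wS_ge0.
- by move=> i; exact: wS_norm.
- by move=> i; exact: wS_norm.
- move=> i; rewrite /wS !inE.
  case: (ltnP (rk i) k) => h.
    by rewrite (leq_trans h kk').
  by case: (rk i < k')%N => //; case/andP: t0.
- exact: upward_Ac.
Qed.

Lemma mu_det (R : realType) (n : nat) (w : 'I_n -> bool -> R) (A : pred {ffun 'I_n -> bool}) :
  (forall i, w i true = 1) -> (forall i, w i false = 0) -> A [ffun=> true] -> mu w A = 1.
Proof.
move=> w1 w0 A1; rewrite /mu (bigD1 [ffun=> true]) //=.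
rewrite [X in _ + X]big1 ?addr0; last first.
  move=> b hb; have bne : b != [ffun=> true] by case/andP: hb.
  case: (pickP (fun i => ~~ b i)) => [i /negbTE bi | H].
    by rewrite (bigD1 i) //= bi w0 mul0r.
  case/eqP: bne; apply/ffunP => i; rewrite ffunE.
  by have := H i; rewrite /=; case: (b i).
by apply: big1 => i _; rewrite ffunE w1.
Qed.

Lemma T_le_qmax (R : realType) (n : nat) (q : 'I_n -> 'I_2 -> R) (z : assignment n) :
  T q z <= sv q [ffun=> true].
Proof.
rewrite /T /sv; apply: ler_sum => i _; rewrite ffunE /qmax le_max.
by case: (I2_cases (z i)) => ->; rewrite lexx ?orbT.
Qed.

Lemma pbar_k0 (R : realType) (n : nat) (q : 'I_n -> 'I_2 -> R) (rk : {perm 'I_n}) z G0 :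
  pbar q rk z G0 0 = 1.
Proof.
rewrite pbar_mu; apply: mu_det => [i|i|]; rewrite /wS ?inE ?ltn0 //.
exact: T_le_qmax.
Qed.


Lemma card_rk (n : nat) (rk : {perm 'I_n}) k : (k <= n)%N ->
  #|[set i | (rk i < k)%N]%SET| = k.
Proof.
move=> kn.
rewrite -(card_imset _ (@perm_inj _ rk)).
have -> : [set rk x | x in [set i | (rk i < k)%N]%SET]%SET =
          [set widen_ord kn x | x in 'I_k]%SET.
  apply/setP => j; apply/imsetP/imsetP => [[x]|[x _ ->]].
    rewrite inE => xk ->; exists (Ordinal xk) => //; exact: val_inj.
  exists (rk^-1 (widen_ord kn x))%g; first by rewrite inE permKV /=.
  by rewrite permKV.
by rewrite card_imset ?card_ord //; move=> x y /(congr1 val) /= xy; apply: val_inj.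
Qed.

Lemma absdiff (R : realType) (a b : R) : Num.max a b - Num.min a b = `|a - b|.
Proof.
case: (leP a b) => h.
  by rewrite distrC ger0_norm // subr_ge0.
by rewrite ger0_norm // subr_ge0 ltW.
Qed.

Lemma Tbar_mu (R : realType) (n : nat) (q : 'I_n -> 'I_2 -> R) (rk : {perm 'I_n}) G0 k c :
  Tbar_tail q rk G0 k c = mu (wS (theta G0) [set i | (rk i < k)%N]%SET) (Ac q c).
Proof.
transitivity (mu (wbar rk G0 k) (Ac q c)); first by [].
by apply: mu_ext => i b; rewrite /wbar /wS inE.
Qed.

Definition hi (R : realType) (n : nat) (q : 'I_n -> 'I_2 -> R) (i : 'I_n) : 'I_2 :=
  if q i ord0 <= q i ord_max then ord_max else ord0.
Definition lo (R : realType) (n : nat) (q : 'I_n -> 'I_2 -> R) (i : 'I_n) : 'I_2 :=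
  if q i ord0 <= q i ord_max then ord0 else ord_max.
Definition hmap (R : realType) (n : nat) (q : 'I_n -> 'I_2 -> R) (b : {ffun 'I_n -> bool}) :
  assignment n := [ffun i => if b i then hi q i else lo q i].

Lemma hilo (R : realType) (n : nat) (q : 'I_n -> 'I_2 -> R) i : hi q i != lo q i.
Proof. by rewrite /hi /lo; case: ifP. Qed.

Lemma hmap_bij (R : realType) (n : nat) (q : 'I_n -> 'I_2 -> R) : bijective (hmap q).
Proof.
exists (fun z : assignment n => [ffun i => z i == hi q i]).
  move=> b; apply/ffunP => i; rewrite !ffunE.
  by case: (b i); rewrite ?eqxx // eq_sym (negbTE (hilo q i)).
move=> z; apply/ffunP => i; rewrite !ffunE.
case: eqP => [->//|zh].
have := hilo q i; rewrite /hi /lo; move: zh; rewrite /hi.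
by case: ifP => _; case: (I2_cases (z i)) => -> //.
Qed.

Lemma T_hmap (R : realType) (n : nat) (q : 'I_n -> 'I_2 -> R) b : T q (hmap q b) = sv q b.
Proof.
apply: eq_bigr => i _; rewrite ffunE /hi /lo /qmax /qmin.
case: (leP (q i ord0) (q i ord_max)) => h; case: (b i) => //.
Qed.

Definition w0 (R : realType) (n : nat) (q : 'I_n -> 'I_2 -> R) (p : 'I_n -> 'I_2 -> R)
  (i : 'I_n) (bb : bool) : R := p i (if bb then hi q i else lo q i).

Lemma prob_tail (R : realType) (n : nat) (q : 'I_n -> 'I_2 -> R) (p : 'I_n -> 'I_2 -> R) c :
  prob p (fun z => c <= T q z) = mu (w0 q p) (Ac q c).
Proof.
rewrite /prob (reindex (hmap q)); last first.
  by case: (hmap_bij q) => g h1 h2; exists g => x _.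
apply: eq_big => b.
  by rewrite asboolb T_hmap.
by move=> _; apply: eq_bigr => i _; rewrite ffunE /w0; case: (b i).
Qed.

Lemma prob_mono (R : realType) (n : nat) (p : 'I_n -> 'I_2 -> R) (E1 E2 : assignment n -> Prop) :
  is_mechanism p -> (forall z, E1 z -> E2 z) -> prob p E1 <= prob p E2.
Proof.
case=> p0 _ h; rewrite /prob big_mkcond [X in _ <= X]big_mkcond /=.
apply: ler_sum => z _.
have P0 : 0 <= \prod_(i < n) p i (z i) by apply: prodr_ge0.
case: (asboolP (E1 z)) => e1; first by rewrite asboolT //; exact: h.
by case: (asboolP (E2 z)).
Qed.

Lemma prob_total (R : realType) (n : nat) (p : 'I_n -> 'I_2 -> R) (E : assignment n -> Prop) :
  is_mechanism p -> prob p E + prob p (fun z => ~ E z) = 1.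
Proof.
case=> p0 p1; rewrite /prob.
under [X in _ + X = _]eq_bigl => z do rewrite asbool_neg.
rewrite -(bigID (fun z => `[< E z >]) predT) /=.
rewrite -(bigA_distr_bigA (fun i (j : 'I_2) => p i j)) /=.
by apply: big1 => i _; exact: p1.
Qed.


Lemma gs_Gspace (R : realType) (n : nat) (p : 'I_n -> 'I_2 -> R) :
  is_mechanism p -> Gspace (gamma_star p).
Proof. by move=> mp i; exact: gs_ge1. Qed.

Lemma dominance (R : realType) (n : nat) (p q : 'I_n -> 'I_2 -> R) (rk : {perm 'I_n}) k c :
  is_mechanism p -> ordered_by_absdiff q rk -> (1 <= k <= n)%N ->
  prob p (fun z => c <= T q z) <= Tbar_tail q rk (kth (gamma_star p) k) k c.
Proof.
move=> mp ord kk.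
have kn : (k <= n)%N by case/andP: kk.
set G := kth (gamma_star p) k.
have G1 : (1 <= G)%E by apply: kth_ge1 => //; exact: gs_Gspace.
have t01 := theta01 G1.
have mk : (k <= #|[pred i | (gamma_star p i <= G)%E]|)%N.
  by rewrite -kth_count.
set e := enum [pred i | (gamma_star p i <= G)%E].
pose K := [set x in take k e]%SET.
have cardK : #|K| = k.
  have sz : size (take k e) = k by rewrite size_takel // /e -cardE.
  rewrite cardsE -[in RHS]sz; apply/card_uniqP.
  by apply: take_uniq; exact: enum_uniq.
have inK : forall i, i \in K -> (gamma_star p i <= G)%E.
  by move=> i; rewrite inE => /mem_take; rewrite mem_enum.
rewrite Tbar_mu prob_tail.
apply: (@le_trans _ _ (mu (wS (theta G) K) (Ac q c))).
  case: (mp) => p0 p1.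
  apply: mu_dom.
  - by move=> i b; exact: p0.
  - by move=> i b; exact: wS_ge0.
  - move=> i; rewrite /w0 -(p1 i) sum_I2 /hi /lo.
    by case: ifP => _ //; rewrite addrC.
  - by move=> i; exact: wS_norm.
  - move=> i; rewrite /wS /w0; case: ifP => iK.
      apply: (le_trans (p_le_theta _ _ mp)); apply: theta_mono; first exact: gs_ge1.
      exact: inK.
    rewrite -(p1 i) sum_I2.
    have a0 := p0 i ord0; have a1 := p0 i ord_max.
    by case: (I2_cases (hi q i)) => ->; lra.
  - exact: upward_Ac.
apply: swap_to => //; last by rewrite card_rk.
move=> i j; rewrite !inE -leqNgt => ki jk.
rewrite /qmax /qmin !absdiff; apply: ord.
exact: (leq_trans jk ki).
Qed.

Lemma main_prob (R : realType) (n : nat) (p q : 'I_n -> 'I_2 -> R) (rk : {perm 'I_n}) (alpha : R) :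
  is_mechanism p -> ordered_by_absdiff q rk -> 0 < alpha < 1 ->
  1 - alpha <= prob p (fun z => forall k, (1 <= k <= n)%N ->
                             alpha < pbar q rk z (kth (gamma_star p) k) k).
Proof.
move=> mp ord a01.
set E := fun z => _.
have tot := prob_total E mp.
suff : prob p (fun z => ~ E z) <= alpha by lra.
case: (pselect (exists z, ~ E z)) => [[z1 nz1]|nex]; last first.
  rewrite /prob big1 //; last first.
  - move=> z; move/asboolP => nz; exfalso; apply: nex; by exists z.
  - by case/andP: a01 => /ltW.
have := @arg_minP _ _ _ z1 (fun z => `[< ~ E z >]) (T q); rewrite asboolT //.
move=> /(_ isT) [z0 /asboolP nz0 zmin].
have [k0 [kk0 pk0]] : exists k, (1 <= k <= n)%N /\
    pbar q rk z0 (kth (gamma_star p) k) k <= alpha.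
  apply: contra_notP nz0 => H k kk; rewrite ltNge; apply/negP => hle.
  by apply: H; exists k.
apply: (le_trans _ pk0).
apply: (le_trans _ (dominance (T q z0) mp ord kk0)).
apply: prob_mono => // z nz.
by apply: zmin; apply/asboolP.
Qed.


Definition Cset (R : realType) (n : nat) (pv : \bar R -> nat -> R) (alpha : R) :
  set ('I_n -> \bar R) :=
  [set G | Gspace G /\ forall G0 k, (1 <= G0)%E -> (1 <= k <= n)%N -> pv G0 k <= alpha ->
                                    ~ (kth G k <= G0)%E].

Lemma Sc_iff (R : realType) (n : nat) (G0 : \bar R) k (G : 'I_n -> \bar R) :
  Sc G0 k G <-> Gspace G /\ ~ (kth G k <= G0)%E.
Proof.
split; first by case=> GS nS; split => // le; apply: nS.
by case=> GS nle; split => // -[_ le].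
Qed.

Lemma interA_C (R : realType) (n : nat) (pv : \bar R -> nat -> R) (alpha : R) :
  interA n pv alpha = Cset pv alpha.
Proof.
rewrite /interA /Cset; apply/seteqP; split => G /=.
  move=> [GS H]; split => // G0 k g1 kk pa.
  by have /Sc_iff[] := H k kk G0 (conj g1 pa).
move=> [GS H]; split => // k kk G0 [g1 pa]; apply/Sc_iff; split => //.
exact: H.
Qed.

Lemma interB_C (R : realType) (n : nat) (pv : \bar R -> nat -> R) (alpha : R) :
  interB n pv alpha = Cset pv alpha.
Proof.
rewrite /interB /Cset; apply/seteqP; split => G /=.
  move=> [GS H]; split => // G0 k g1 kk pa.
  by have /Sc_iff[] := H G0 g1 k (conj kk pa).
move=> [GS H]; split => // G0 g1 k [kk pa]; apply/Sc_iff; split => //.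
exact: H.
Qed.

Lemma interC_C (R : realType) (n : nat) (pv : \bar R -> nat -> R) (alpha : R) :
  interC n pv alpha = Cset pv alpha.
Proof.
rewrite /interC /Cset; apply/seteqP; split => G /=.
  move=> [GS H]; split => // G0 k g1 kk pa.
  by have /Sc_iff[] := H (G0, k) (And3 g1 kk pa).
move=> [GS H]; split => // -[G0 k] [/= g1 kk pa]; apply/Sc_iff; split => //.
exact: H.
Qed.

Lemma C_third (R : realType) (n : nat) (q : 'I_n -> 'I_2 -> R) (rk : {perm 'I_n}) z (alpha : R) :
  @Cset R n (pbar q rk z) alpha =
  [set G | Gspace G /\ forall k, (1 <= k <= n)%N -> alpha < pbar q rk z (kth G k) k].
Proof.
apply/seteqP; split => G /= [GS H]; split => //.
  move=> k kk; rewrite ltNge; apply/negP => le.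
  by apply: (H (kth G k) k (kth_ge1 GS kk) kk le).
move=> G0 k g1 kk pa le; have := H k kk; rewrite ltNge => /negP; apply.
exact: le_trans (pbar_monoG q rk z k (kth_ge1 GS kk) le) pa.
Qed.

Lemma C_fourth (R : realType) (n : nat) (q : 'I_n -> 'I_2 -> R) (rk : {perm 'I_n}) z (alpha : R) :
  alpha < 1 ->
  @Cset R n (pbar q rk z) alpha =
  [set G | Gspace G /\ forall G0, (1 <= G0)%E ->
      exists k, [/\ (k <= n)%N, Icount G G0 = (n - k)%N & alpha < pbar q rk z G0 k]].
Proof.
move=> a1; apply/seteqP; split => G /= [GS H]; split => //.
  move=> G0 g1; have hI := Icount_le G G0.
  set m := #|[pred i | (G i <= G0)%E]| in hI *.
  exists m; split.
  - by move: hI; set ic := Icount G G0; lia.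
  - by move: hI; set ic := Icount G G0; lia.
  case: (posnP m) => [->|m0]; first by rewrite pbar_k0.
  have mm : (1 <= m <= n)%N by move: hI m0; set ic := Icount G G0; lia.
  rewrite ltNge; apply/negP => le.
  by apply: (H G0 m g1 mm le); rewrite kth_count.
move=> G0 k g1 kk pa le.
have [k' [k'n Ik' ak']] := H G0 g1.
have hI := Icount_le G G0.
set m := #|[pred i | (G i <= G0)%E]| in hI *.
have mk' : m = k'.
  by move: hI k'n; rewrite Ik'; lia.
rewrite kth_count // -/m mk' in le.
have := pbar_monok q rk z g1 le.
by move=> /le_trans /(_ pa); rewrite leNgt ak'.
Qed.


Unset Implicit Arguments. Set Strict Implicit.

Theorem theorem3 (R : realType) (n : nat)
  (p : 'I_n -> 'I_2 -> R)
  (Y0 Y1 : 'I_n -> 'I_2 -> R)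
  (qf : ('I_n -> 'I_2 -> R) -> 'I_n -> 'I_2 -> R)
  (rk : {perm 'I_n}) (alpha : R) :
  is_mechanism p ->
  Y1 = Y0 ->
  ordered_by_absdiff (qf Y0) rk ->
  0 < alpha < 1 ->
  (forall z : assignment n,
     let pv := pbar (qf Y0) rk z in
     [/\ interA n pv alpha = interB n pv alpha,
         interB n pv alpha = interC n pv alpha,
         interA n pv alpha =
           [set G | Gspace G /\
              forall k, (1 <= k <= n)%N -> alpha < pv (kth G k) k]
       & interB n pv alpha =
           [set G | Gspace G /\
              forall G0, (1 <= G0)%E ->
                exists k, [/\ (k <= n)%N, Icount G G0 = (n - k)%N & alpha < pv G0 k]]])
  /\ 1 - alpha <= prob p (fun z => interC n (pbar (qf Y0) rk z) alpha (gamma_star p))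
  /\ 1 - alpha <= prob p (fun z => forall k, (1 <= k <= n)%N ->
                             alpha < pbar (qf Y0) rk z (kth (gamma_star p) k) k).
Proof.
move=> mp _ ord a01.
have a1 : alpha < 1 by case/andP: a01.
split.
  move=> z /=; rewrite interA_C interB_C interC_C; split => //.
    exact: C_third.
  exact: C_fourth.
split; last exact: main_prob.
have -> : (fun z => interC n (pbar (qf Y0) rk z) alpha (gamma_star p)) =
          (fun z => forall k, (1 <= k <= n)%N ->
                   alpha < pbar (qf Y0) rk z (kth (gamma_star p) k) k).
  apply: funext => z; rewrite interC_C C_third; apply: propext; split.
    by case.
  by move=> H; split => //; exact: gs_Gspace.
exact: main_prob.
Qed.
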